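(* Let $n\geq 2$ and let $\mathbb{H}^{n}\times\mathbb{R}=\{(x,t)\in\mathbb{R}^{n}\times\mathbb{R}: x=(x_1,\dots,x_n),\ x_n>0\}$ be endowed with the metric $g=\frac{1}{x_{n}^{2}}\sum_{i=1}^{n}dx_{i}^{2}+dt^{2}$. Let $0<m<\infty$ and $\lambda$ be constants and $f$ a smooth function on $\mathbb{H}^{n}\times\mathbb{R}$ with $Ric+\nabla^{2}f-\frac{1}{m}df\otimes df=\lambda g$. Then (for each fixed $x$) either $\frac{\partial f}{\partial t}(x,t)=\pm\sqrt{-m\lambda}$ for all $t$, or $\frac{\partial f}{\partial t}(x,t)=-\sqrt{-m\lambda}\tanh(\mu t+a)$ for all $t$, where $a=a(x)$ and $\mu=\sqrt{-\frac{\lambda}{m}}$.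
   Context: $Ric$ denotes the Ricci tensor of $g$ and $\nabla^2 f$ the Hessian of $f$ with respect to $g$. *)

(* Defs.v *)
From HB Require Import structures.
From mathcomp Require Import all_boot all_order all_algebra.
From mathcomp Require Import all_classical all_reals all_analysis.
Set Implicit Arguments. Unset Strict Implicit. Unset Printing Implicit Defensive.
Import Order.TTheory GRing.Theory Num.Theory.
Import numFieldNormedType.Exports.
Local Open Scope ring_scope.

Section Coordinates.
Variables (R : realType) (N : nat).
Local Notation V := 'rV[R]_N.

Definition ebasis (i : 'I_N) : V := delta_mx 0 i.

Definition partial (i : 'I_N) (f : V -> R) : V -> R :=
  fun p => 'D_(ebasis i) f p.

Fixpoint iter_partial (s : seq 'I_N) (f : V -> R) : V -> R :=
  match s with
  | [::] => f
  | i :: s' => partial i (iter_partial s' f)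
  end.

Definition smooth_on (U : set V) (f : V -> R) : Prop :=
  forall (s : seq 'I_N) (p : V), U p ->
    (forall i : 'I_N, derivable (iter_partial s f) p (ebasis i))
    /\ {for p, continuous (iter_partial s f)}.

(* A Riemannian metric given in global coordinates: g i j p = g_{ij}(p). *)
Variable g : 'I_N -> 'I_N -> V -> R.

Definition ginv (i j : 'I_N) (p : V) : R :=
  invmx (\matrix_(a < N, b < N) g a b p) i j.

Definition christoffel (k i j : 'I_N) (p : V) : R :=
  2^-1 * \sum_(l < N) ginv k l p *
     (partial i (g j l) p + partial j (g i l) p - partial l (g i j) p).

Definition ricci (i j : 'I_N) (p : V) : R :=
  \sum_(k < N) (partial k (christoffel k i j) p - partial j (christoffel k i k) p)
  + \sum_(k < N) \sum_(l < N)
      (christoffel k k l p * christoffel l i j p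
       - christoffel k j l p * christoffel l i k p).

Definition hessian (f : V -> R) (i j : 'I_N) (p : V) : R :=
  partial i (partial j f) p - \sum_(k < N) christoffel k i j p * partial k f p.

End Coordinates.

Definition tanh {R : realType} (x : R) : R :=
  (expR x - expR (- x)) / (expR x + expR (- x)).

(* H^n x R as the subset {x_n > 0} of R^(n+1), coordinates
   (x_1,...,x_n,t) = indices 0,...,n-1,n. *)
Definition xn_idx (n : nat) : 'I_n.+1 := inord n.-1.
Definition t_idx (n : nat) : 'I_n.+1 := ord_max.

Definition HnR (R : realType) (n : nat) : set 'rV[R]_n.+1 :=
  [set p | 0 < p 0 (xn_idx n)].

Definition gHnR (R : realType) (n : nat) (i j : 'I_n.+1) (p : 'rV[R]_n.+1) : R :=
  if i == j then (if i == t_idx n then 1 else (p 0 (xn_idx n) ^+ 2)^-1) else 0.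

Definition with_t (R : realType) (n : nat) (p : 'rV[R]_n.+1) (t : R) : 'rV[R]_n.+1 :=
  \row_j (if j == t_idx n then t else p 0 j).

(* Main.v *)
Set Warnings "-notation-overridden,-ambiguous-paths,-notation-incompatible-prefix".
From HB Require Import structures.
From mathcomp Require Import all_boot all_order all_algebra.
From mathcomp Require Import all_classical all_reals all_analysis.
From mathcomp Require Import ring lra.
Require Import Defs.
Import Order.TTheory GRing.Theory Num.Theory.
Import numFieldNormedType.Exports.
Local Open Scope classical_set_scope.
Local Open Scope ring_scope.

Section ODE.
Context {R : realType}.

Lemma cont_of_der (z : R -> R) : (forall t, derivable z t 1) -> continuous z.
Proof. by move=> dz t; apply/differentiable_continuous/derivable1_diffP. Qed.

Lemma lin_zero (z k : R -> R) t0 : (forall t, derivable z t 1) ->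
  (forall t, derive1 z t = z t * k t) -> continuous k -> z t0 = 0 -> forall t, z t = 0.
Proof.
move=> dz ez ck z0 t1.
set a := if t0 <= t1 then t0 else t1; set b := if t0 <= t1 then t1 else t0.
have ab : a <= b by rewrite /a /b; case: (leP t0 t1) => // /ltW.
have [c0 _ Hc0] := EVT_max ab (continuous_subspaceT (fun x => continuous_comp (ck x) (@norm_continuous _ R (k x)))).
set K : R := `|k c0|.
set s := Num.sg (t1 - t0).
pose phi t := z t ^+ 2 * expR (- (2 * K * s) * t).
pose dphi t := z t ^+ 2 * expR (- (2 * K * s) * t) * (2 * (k t - K * s)).
have Dphi (t : R) : is_derive t 1 phi (dphi t).
  have Dz : is_derive t 1 z (z t * k t) by rewrite -ez derive1E; exact: derivableP.
  have De : is_derive t 1 (fun x => expR (- (2 * K * s) * x)) (expR (- (2 * K * s) * t) * (- (2 * K * s))).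
    apply: (@is_derive1_comp _ expR (fun x => - (2 * K * s) * x)).
    have -> : (fun x : R => - (2 * K * s) * x) = (- (2 * K * s)) \*: (@id R) by apply/funext.
    apply: is_derive_eq; by rewrite [_%:A]mulr1.
  have -> : phi = (z ^+ 2) * (fun x => expR (- (2 * K * s) * x)) by apply/funext => x; rewrite /phi /= .
  have H2 := is_deriveX 2 Dz.
  have H := is_deriveM H2 De.
  apply: (is_derive_eq H); rewrite /= exprfctE /dphi -!mulrA. rewrite /GRing.scale /=; ring.
have cphi : {within `[a, b], continuous phi}.
  apply: continuous_subspaceT => x; apply/differentiable_continuous/derivable1_diffP.
  by case: (Dphi x).
have [c cab Hc] := MVT_segment ab (fun x _ => Dphi x) cphi.
have Hd : phi t1 - phi t0 = dphi c * (t1 - t0).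
  move: Hc; rewrite /a /b; case: (leP t0 t1) => h /= E //.
  by rewrite -opprB E -mulrN opprB.
have cK : `|k c| <= K by exact: (Hc0 c cab).
have Hle : dphi c * (t1 - t0) <= 0.
  have e1 : s * (t1 - t0) = `|t1 - t0| by rewrite /s -normrEsg.
  have e2 : k c * (t1 - t0) <= K * `|t1 - t0|.
    by apply: le_trans (ler_norm _) _; rewrite normrM ler_wpM2r.
  have e3 : (k c - K * s) * (t1 - t0) <= 0.
    by rewrite mulrBl -mulrA e1 subr_le0.
  have -> : dphi c * (t1 - t0) = (z c ^+ 2 * expR (- (2 * K * s) * c) * 2) * ((k c - K * s) * (t1 - t0)) by rewrite /dphi; ring.
  apply: mulr_ge0_le0 => //; apply: mulr_ge0 => //; apply: mulr_ge0; [exact: sqr_ge0 | exact: expR_ge0].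
have p0 : phi t0 = 0 by rewrite /phi z0 expr2 !mul0r.
have : phi t1 <= 0 by lra.
rewrite /phi pmulr_lle0 ?expR_gt0 // => hz.
by apply/eqP; rewrite -sqrf_eq0 eq_le hz sqr_ge0.
Qed.

Lemma lin_zero' (z k : R -> R) (dk : R -> R) (t0 : R) :
  (forall t : R, is_derive t 1 z (z t * k t)) ->
  (forall t : R, is_derive t 1 k (dk t)) -> z t0 = 0 -> forall t, z t = 0.
Proof.
move=> Dz Dk z0; apply: (@lin_zero z k t0).
- by move=> t; case: (Dz t) => ? _.
- by move=> t; rewrite derive1E derive_val.
- by apply: cont_of_der => t; case: (Dk t) => ? _.
- exact: z0.
Qed.

Lemma cst_der (v : R -> R) : (forall t : R, is_derive t 1 v 0) -> forall t, v t = v 0.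
Proof.
move=> Dv t; apply/eqP; rewrite -subr_eq0; apply/eqP.
have Dz (x : R) : is_derive x 1 (fun y => v y - v 0) ((v x - v 0) * 0).
  by apply: is_derive_eq; rewrite mulr0 subr0.
have Dk (x : R) : is_derive x 1 (fun _ : R => (0:R)) 0 by apply: is_derive_cst.
have := @lin_zero' _ _ _ 0 Dz Dk; apply; by rewrite /= subrr.
Qed.

Lemma ode_pos (u : R -> R) (m l : R) : 0 < m -> 0 < l ->
  (forall t : R, is_derive t 1 u (l + m^-1 * u t ^+ 2)) -> False.
Proof.
move=> m0 l0 Du.
set c := Num.sqrt (m * l).
have c0 : 0 < c by rewrite sqrtr_gt0 mulr_gt0.
have cc : c ^+ 2 = m * l by rewrite sqr_sqrtr // ltW // mulr_gt0.
have hl : l = c ^+ 2 / m by rewrite cc; field; rewrite gt_eqF.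
pose v t := atan (c^-1 * u t) - c / m * t.
have Dv (t : R) : is_derive t 1 v 0.
  have Dw : is_derive t 1 (fun x => c^-1 * u x) (c^-1 * (l + m^-1 * u t ^+ 2)) by apply: is_derive_eq.
  have Da := @is_derive1_comp _ atan (fun x => c^-1 * u x) t _ _ (is_derive1_atan _) Dw.
  rewrite /v; apply: is_derive_eq.
  have h1 : 0 < 1 + (c^-1 * u t) ^+ 2 by have := sqr_ge0 (c^-1 * u t); lra.
  have h2 : 0 < c ^+ 2 + u t ^+ 2.
    by have := sqr_ge0 (u t); have : 0 < c ^+ 2 := exprn_gt0 2 c0; lra.
  rewrite [_%:A]mulr1 {1}hl; field.
  by rewrite (gt_eqF m0) (gt_eqF c0) (gt_eqF h2).
have Hv := cst_der v Dv.
set ts := (pi / 2 - v 0) * (m / c).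
have E : atan (c^-1 * u ts) - c / m * ts = v 0 := Hv ts.
have : c / m * ts = pi / 2 - v 0.
  by rewrite /ts; field; rewrite (gt_eqF m0) (gt_eqF c0).
have := atan_ltpi2 (c^-1 * u ts).
lra.
Qed.

Lemma ode_zero (u : R -> R) (m : R) : 0 < m ->
  (forall t : R, is_derive t 1 u (0 + m^-1 * u t ^+ 2)) -> forall t, u t = 0.
Proof.
move=> m0 Du.
have [[t0 ht0]|hn] := pselect (exists t0, u t0 = 0).
  have Dz (t : R) : is_derive t 1 u (u t * (m^-1 * u t)).
    by apply: (is_derive_eq (Du t)); ring.
  have Dk (t : R) : is_derive t 1 (fun x => m^-1 * u x) (m^-1 * (u t * (m^-1 * u t))).
    by apply: is_derive_eq.
  exact: (@lin_zero' u (fun x => m^-1 * u x) _ t0 Dz Dk ht0).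
have unz (t : R) : u t != 0 by apply/eqP => h; apply: hn; exists t.
pose w t := (u t)^-1 + m^-1 * t.
have Dw (t : R) : is_derive t 1 w 0.
  have DV := is_deriveV (unz t) (Du t).
  rewrite /w; apply: is_derive_eq.
  rewrite [_%:A]mulr1 /GRing.scale /=; field.
  by rewrite (gt_eqF m0) unz.
have Hw := cst_der w Dw.
set ts := m * w 0.
have E : (u ts)^-1 + m^-1 * ts = w 0 := Hw ts.
have : m^-1 * ts = w 0 by rewrite /ts mulrA mulVf ?mul1r // gt_eqF.
move=> h; move: E; rewrite h => E.
have : (u ts)^-1 = 0 by lra.
by move/eqP; rewrite invr_eq0 (negbTE (unz ts)).
Qed.

Lemma is_derive_expRM (a t : R) :
  is_derive t 1 (fun x : R => expR (a * x)) (expR (a * t) * a).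
Proof.
apply: (@is_derive1_comp _ expR (fun x => a * x)).
have -> : (fun x : R => a * x) = a \*: (@id R) by apply/funext.
apply: is_derive_eq; by rewrite [_%:A]mulr1.
Qed.

Lemma ode_neg (u : R -> R) (m l : R) : 0 < m -> l < 0 ->
  (forall t : R, is_derive t 1 u (l + m^-1 * u t ^+ 2)) ->
  (forall t, u t = Num.sqrt (- m * l)) \/ (forall t, u t = - Num.sqrt (- m * l)) \/
  (exists a, forall t, u t = - Num.sqrt (- m * l) * tanh (Num.sqrt (- l / m) * t + a)).
Proof.
move=> m0 l0 Du.
set c := Num.sqrt (- m * l).
have ml : 0 < - m * l by rewrite mulNr oppr_gt0 pmulr_rlt0.
have c0 : 0 < c by rewrite sqrtr_gt0.
have cc : c ^+ 2 = - m * l by rewrite sqr_sqrtr // ltW.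
have hl : l = - c ^+ 2 / m by rewrite cc; field; rewrite gt_eqF.
have Du' (t : R) : is_derive t 1 u (m^-1 * ((u t - c) * (u t + c))).
  by apply: (is_derive_eq (Du t)); rewrite hl; field; rewrite gt_eqF.
clear Du.
have [[t0 ht0]|hc] := pselect (exists t0, u t0 = c).
  left => t; apply/eqP; rewrite -subr_eq0; apply/eqP.
  have Dz (t1 : R) : is_derive t1 1 (fun x => u x - c) ((u t1 - c) * (m^-1 * (u t1 + c))).
    by apply: is_derive_eq; rewrite /GRing.scale /=; ring.
  have Dk (t1 : R) : is_derive t1 1 (fun x => m^-1 * (u x + c)) (m^-1 * (m^-1 * ((u t1 - c) * (u t1 + c)))).
    by apply: is_derive_eq; rewrite /GRing.scale /=; ring.
  apply: (@lin_zero' (fun x => u x - c) (fun x => m^-1 * (u x + c)) _ t0 Dz Dk).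
  by rewrite /= ht0 subrr.
have [[t0 ht0]|hnc] := pselect (exists t0, u t0 = - c).
  right; left => t; apply/eqP; rewrite -subr_eq0 opprK; apply/eqP.
  have Dz (t1 : R) : is_derive t1 1 (fun x => u x + c) ((u t1 + c) * (m^-1 * (u t1 - c))).
    by apply: is_derive_eq; rewrite /GRing.scale /=; ring.
  have Dk (t1 : R) : is_derive t1 1 (fun x => m^-1 * (u x - c)) (m^-1 * (m^-1 * ((u t1 - c) * (u t1 + c)))).
    by apply: is_derive_eq; rewrite /GRing.scale /=; ring.
  apply: (@lin_zero' (fun x => u x + c) (fun x => m^-1 * (u x - c)) _ t0 Dz Dk).
  by rewrite /= ht0 addNr.
right; right.
have unc (t : R) : u t - c != 0 by rewrite subr_eq0; apply/eqP => h; apply: hc; exists t.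
have upc (t : R) : u t + c != 0.
  by rewrite -[c]opprK subr_eq0; apply/eqP => h; apply: hnc; exists t.
pose r t := (u t - c) / (u t + c).
have Dr (t : R) : is_derive t 1 r (r t * (2 * c / m)).
  have Dum : is_derive t 1 (fun x => u x - c) (m^-1 * ((u t - c) * (u t + c))).
    by apply: is_derive_eq; rewrite subr0.
  have Dup : is_derive t 1 (fun x => u x + c) (m^-1 * ((u t - c) * (u t + c))).
    by apply: is_derive_eq; rewrite addr0.
  have DV := @is_deriveV _ (fun x => u x + c) t _ _ (upc t) Dup.
  have -> : r = (fun x => u x - c) * (fun x => (u x + c)^-1) by apply/funext.
  apply: (is_derive_eq (is_deriveM Dum DV)).
  rewrite mulrfctE /GRing.scale /=; field.
  by rewrite (gt_eqF m0) upc.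
pose z t := r t - r 0 * expR (2 * c / m * t).
have Dz (t : R) : is_derive t 1 z (z t * (2 * c / m)).
  have De := is_derive_expRM (2 * c / m) t.
  rewrite /z; apply: is_derive_eq; rewrite /GRing.scale /=; ring.
have Dk (t : R) : is_derive t 1 (fun _ : R => 2 * c / m) 0 by apply: is_derive_cst.
have Hz := @lin_zero' z (fun _ => 2 * c / m) _ 0 Dz Dk.
have hr (t : R) : r t = r 0 * expR (2 * c / m * t).
  by apply/eqP; rewrite -subr_eq0; apply/eqP; apply: Hz; rewrite /z mulr0 expR0 mulr1 subrr.
have r1 (t : R) : r t != 1.
  apply/eqP => h; rewrite /r in h.
  have e : u t - c = u t + c by rewrite -[LHS](divfK (upc t)) h mul1r.
  lra.
have r00 : r 0 != 0 by rewrite /r mulf_neq0 ?invr_eq0 ?unc ?upc.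
have rneg : r 0 < 0.
  case: (ltgtP (r 0) 0) => // [r0p|r0z]; last by move: r00; rewrite r0z eqxx.
  exfalso; set ts := ln ((r 0)^-1) * (m / (2 * c)).
  have : r ts = 1.
    rewrite hr.
    have -> : 2 * c / m * ts = ln ((r 0)^-1) by rewrite /ts; field; rewrite (gt_eqF m0) (gt_eqF c0).
    by rewrite lnK ?posrE ?invr_gt0 // mulfV.
  by move/eqP; rewrite (negbTE (r1 ts)).
set b := ln (- r 0) / 2.
exists b => t.
have hmu : Num.sqrt (- l / m) = c / m.
  have -> : - l / m = (c / m) ^+ 2 by rewrite hl; field; rewrite gt_eqF.
  by rewrite sqrtr_sqr ger0_norm // divr_ge0 // ltW.
rewrite hmu.
set x := c / m * t + b.
set X := expR x.
have X0 : 0 < X by exact: expR_gt0.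
have hE : r t = - (X * X).
  rewrite hr /X -expRD.
  have -> : x + x = ln (- r 0) + 2 * c / m * t by rewrite /x /b; field; rewrite gt_eqF.
  by rewrite expRD lnK ?posrE ?oppr_gt0 //; ring.
have hr' : u t - c = r t * (u t + c) by rewrite /r divfK.
have key : u t * (1 + X * X) = c * (1 - X * X).
  apply/eqP; rewrite -subr_eq0; apply/eqP.
  have -> : u t * (1 + X * X) - c * (1 - X * X) = (u t - c) + X * X * (u t + c) by ring.
  by rewrite hr' hE; ring.
have nz : 1 + X * X != 0 by rewrite gt_eqF //; have := mulr_gt0 X0 X0; lra.
have hu : u t = c * (1 - X * X) / (1 + X * X) by rewrite -key mulfK.
rewrite hu /tanh expRN -/X; field.
have : 0 < X * X + 1 by have := mulr_gt0 X0 X0; lra.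
by move=> h; rewrite (gt_eqF X0) gt_eqF.
Qed.

Lemma ode_all (u : R -> R) (m l : R) : 0 < m ->
  (forall t : R, is_derive t 1 u (l + m^-1 * u t ^+ 2)) ->
  (forall t, u t = Num.sqrt (- m * l)) \/ (forall t, u t = - Num.sqrt (- m * l)) \/
  (exists a, forall t, u t = - Num.sqrt (- m * l) * tanh (Num.sqrt (- l / m) * t + a)).
Proof.
move=> m0 Du.
case: (ltgtP l 0) => [ln|lp|lz].
- exact: ode_neg.
- by exfalso; exact: (@ode_pos u m l m0 lp Du).
- left => t; rewrite lz mulr0 ?oppr0 sqrtr0.
  by apply: (@ode_zero u m m0) => x; rewrite -lz.
Qed.
End ODE.

Section Geo.
Variables (R : realType) (n : nat).
Hypothesis n0 : (0 < n)%N.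
Local Notation V := 'rV[R]_n.+1.
Local Notation tt := (t_idx n).
Local Notation g := (@gHnR R n).

Lemma xn_ne_t : xn_idx n != tt.
Proof.
apply/eqP => /(congr1 val); rewrite /xn_idx /t_idx /= inordK; last by rewrite ltnS leq_pred.
by case: n n0 => // k _; exact: n_Sn.
Qed.

Lemma shift_coord (h : R) (q : V) : (h *: ebasis R tt + q) 0 (xn_idx n) = q 0 (xn_idx n).
Proof. by rewrite !mxE (negbTE xn_ne_t) /= mulr0 add0r. Qed.

Lemma g_shift i j (q : V) (h : R) : g i j (h *: ebasis R tt + q) = g i j q.
Proof. by rewrite /gHnR shift_coord. Qed.

Lemma g_t_const j (q q' : V) : g tt j q = g tt j q'.
Proof. by rewrite /gHnR; case: eqP => // _; rewrite eqxx. Qed.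

Lemma g_t_const' j (q q' : V) : g j tt q = g j tt q'.
Proof. by rewrite /gHnR; case: eqP => // ->; rewrite eqxx. Qed.

Lemma D_inv (F : V -> R) (v a : V) : (forall h : R, F (h *: v + a) = F a) -> 'D_v F a = 0.
Proof.
move=> H; rewrite /derive.
have -> : (fun h : R => h^-1 *: ((F \o shift a) (h *: v) - F a)) = fun _ => 0.
  by apply/funext => h; rewrite /= H subrr scaler0.
exact: lim_cst.
Qed.

Lemma gamma_t0 k j (q : V) : christoffel g k tt j q = 0.
Proof.
rewrite /christoffel big1 ?mulr0 // => l _.
rewrite /partial.
rewrite (@D_inv (g j l)) ?(@D_inv (g tt l)) ?(@D_inv (g tt j)) ?addr0 ?subrr ?mulr0 //.
- by move=> h; exact: g_t_const.
- by move=> h; exact: g_t_const.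
- by move=> h; exact: g_shift.
Qed.

Lemma Ct k j : christoffel g k tt j = fun _ => 0.
Proof. by apply/funext => q; exact: gamma_t0. Qed.

Lemma ricci_tt (q : V) : ricci g tt tt q = 0.
Proof.
rewrite /ricci big1; last first.
  by move=> k _; rewrite !Ct /partial !D_inv ?subrr.
rewrite add0r big1 // => k _; apply: big1 => l _.
by rewrite !gamma_t0 ?mulr0 ?mul0r subrr.
Qed.

Lemma hessian_tt (f : V -> R) (q : V) : hessian g f tt tt q = partial tt (partial tt f) q.
Proof. by rewrite /hessian big1 ?subr0 // => k _; rewrite gamma_t0 mul0r. Qed.

Lemma g_tt (q : V) : g tt tt q = 1.
Proof. by rewrite /gHnR !eqxx. Qed.

Lemma with_t_shift (p : V) (s h : R) : with_t p (h *: 1 + s) = h *: ebasis R tt + with_t p s.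
Proof.
apply/rowP => j; rewrite !mxE eqxx /=.
by case: (j == tt) => /=; rewrite ?[_%:A]mulr1 ?mulr1 ?mulr0 ?add0r.
Qed.

Lemma D_with_t (F : V -> R) (p : V) (s : R) :
  'D_1 (fun t : R => F (with_t p t)) s = 'D_(ebasis R tt) F (with_t p s) /\
  (derivable (fun t : R => F (with_t p t)) s 1 <-> derivable F (with_t p s) (ebasis R tt)).
Proof.
have E : (fun h : R => h^-1 *: (((fun t : R => F (with_t p t)) \o shift s) (h *: 1) - F (with_t p s)))
  = (fun h : R => h^-1 *: ((F \o shift (with_t p s)) (h *: ebasis R tt) - F (with_t p s))).
  by apply/funext => h; rewrite /= with_t_shift.
by rewrite /derive /derivable E.
Qed.

End Geo.


Local Close Scope classical_set_scope.

Theorem lemma3 (R : realType) (n : nat) (m lambda : R) (f : 'rV[R]_n.+1 -> R) :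
  (2 <= n)%N -> 0 < m ->
  smooth_on (@HnR R n) f ->
  (forall (p : 'rV[R]_n.+1), @HnR R n p -> forall i j : 'I_n.+1,
     ricci (@gHnR R n) i j p + hessian (@gHnR R n) f i j p
       - m^-1 * (partial i f p * partial j f p) = lambda * @gHnR R n i j p) ->
  forall p : 'rV[R]_n.+1, @HnR R n p ->
    (forall t : R, partial (t_idx n) f (with_t p t) = Num.sqrt (- m * lambda)) \/
    (forall t : R, partial (t_idx n) f (with_t p t) = - Num.sqrt (- m * lambda)) \/
    (exists a : R, forall t : R,
       partial (t_idx n) f (with_t p t) =
         - Num.sqrt (- m * lambda) * tanh (Num.sqrt (- lambda / m) * t + a)).
Proof.
move=> n2 m0 sm heq p Hp.
have n0 : (0 < n)%N by apply: leq_trans n2.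
pose u (t : R) := partial (t_idx n) f (with_t p t).
have Du (t : R) : is_derive t 1 u (lambda + m^-1 * u t ^+ 2).
  set q := with_t p t.
  have Hq : HnR q by rewrite /HnR /= /q mxE (negbTE (@xn_ne_t n n0)).
  have [D1 D2] := @D_with_t R n (partial (t_idx n) f) p t.
  have [dv _] := sm [:: t_idx n] q Hq.
  have dq : derivable (partial (t_idx n) f) q (ebasis R (t_idx n)) := dv (t_idx n).
  have E := heq q Hq (t_idx n) (t_idx n).
  rewrite (@ricci_tt R n n0) (@hessian_tt R n n0) g_tt add0r mulr1 in E.
  apply: DeriveDef; first by apply/D2.
  rewrite D1 -E /u -/q expr2 /partial; ring.
exact: (@ode_all R u m lambda m0 Du).
Qed.
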